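(* Let $a<b$ be real numbers, let $t_1,\ldots,t_n$ be numbers and put $s_k:=t_1^k+\cdots+t_n^k$ for $k\ge 0$ (so $s_0=n$). (i) If $t_1,\ldots,t_n$ are real numbers lying in $[a,b]$, then for every natural number $m\ge 1$ the matrix $H_m(s_0,s_1,\ldots,s_{2m-1},[a,b])$ is positive semidefinite. (ii) Conversely, suppose $t_1,\ldots,t_n$ are complex numbers such that all power sums $s_k$ are real, and let $m\ge \operatorname{rank}(R_n)$, where $R_n=(s_{i+j-2})_{i,j=1}^n$ (this rank equals the number of distinct values among the $t_i$). If $H_m(s_0,s_1,\ldots,s_{2m-1},[a,b])$ is positive semidefinite, then all $t_i$ are real and lie in $[a,b]$.
   Context: For real numbers $s_0,s_1,\ldots,s_{2m-1}$ and reals $a<b$, define the $m\times m$ matrices $R_m=(s_{i+j-2})_{i,j=1}^m$, $F_m^+(a)=(s_{i+j-1}-a\,s_{i+j-2})_{i,j=1}^m$, $F_m^-(b)=(b\,s_{i+j-2}-s_{i+j-1})_{i,j=1}^m$, and the $3m\times 3m$ block-diagonal matrix $H_m(s_0,\ldots,s_{2m-1},[a,b])=\operatorname{diag}(R_m,F_m^+(a),F_m^-(b))$. *)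

(* Defs.v *)
From HB Require Import structures.
From mathcomp Require Import all_boot all_order all_algebra.
From mathcomp Require Export complex.
Set Implicit Arguments. Unset Strict Implicit. Unset Printing Implicit Defensive.
Import Order.TTheory GRing.Theory Num.Theory.
Local Open Scope ring_scope.

(* Hankel matrix R_m = (s_{i+j-2})_{i,j=1..m}; with 0-based indices: s (i+j). *)
Definition hankR (R : ringType) (m : nat) (s : nat -> R) : 'M[R]_m :=
  \matrix_(i < m, j < m) s (i + j)%N.

Definition hankFp (R : ringType) (m : nat) (s : nat -> R) (a : R) : 'M[R]_m :=
  \matrix_(i < m, j < m) (s (i + j).+1 - a * s (i + j)%N).

Definition hankFm (R : ringType) (m : nat) (s : nat -> R) (b : R) : 'M[R]_m :=
  \matrix_(i < m, j < m) (b * s (i + j)%N - s (i + j).+1).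

(* H_m(s_0..s_{2m-1},[a,b]) = diag(R_m, F_m^+(a), F_m^-(b)), a 3m x 3m matrix
   (indexed by 'I_(m + (m + m))). Only s_0..s_{2m-1} are used. *)
Definition hankH (R : ringType) (m : nat) (s : nat -> R) (a b : R)
  : 'M[R]_(m + (m + m)) :=
  block_mx (hankR m s) 0 0 (block_mx (hankFp m s a) 0 0 (hankFm m s b)).

Definition psd (R : numDomainType) (k : nat) (M : 'M[R]_k) : Prop :=
  M^T = M /\ forall v : 'cV[R]_k, 0 <= (v^T *m M *m v) 0 0.

(* Main.v *)
Require Import Defs.
From HB Require Import structures.
From mathcomp Require Import all_boot all_order all_algebra.
From mathcomp Require Import complex.
From mathcomp Require Import ring lra.
Import Order.TTheory GRing.Theory Num.Theory.
Local Open Scope ring_scope.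

Lemma hank_form (K : comNzRingType) m n (f : nat -> K) (c t : 'I_n -> K)
  (v : 'cV[K]_m) :
  (forall k, f k = \sum_j c j * t j ^+ k) ->
  (v^T *m (\matrix_(i < m, j < m) f (i + j)%N) *m v) 0 0 =
  \sum_j c j * (\sum_(k < m) v k 0 * t j ^+ k) ^+ 2.
Proof.
move=> hf.
transitivity (\sum_(l < m) \sum_(k < m) \sum_j v k 0 * (c j * t j ^+ (k + l)) * v l 0).
  rewrite mxE; apply: eq_bigr => l _; rewrite mxE big_distrl /=.
  apply: eq_bigr => k _; rewrite !mxE hf big_distrr big_distrl /=.
  by apply: eq_bigr => j _.
under eq_bigr do rewrite exchange_big /=.
rewrite exchange_big /=; apply: eq_bigr => j _.
rewrite expr2 big_distrr /= big_distrr /=; apply: eq_bigr => l _.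
rewrite big_distrl /= big_distrr /=; apply: eq_bigr => k _.
rewrite exprD; ring.
Qed.

Lemma form_block (K : comNzRingType) m1 m2 (A : 'M[K]_m1) (B : 'M[K]_m2)
  (u : 'cV_m1) (w : 'cV_m2) :
  ((col_mx u w)^T *m block_mx A 0 0 B *m col_mx u w) 0 0 =
  (u^T *m A *m u) 0 0 + (w^T *m B *m w) 0 0.
Proof.
by rewrite tr_col_mx mul_row_block !mulmx0 addr0 add0r mul_row_col mxE.
Qed.

Lemma psd_block (K : numDomainType) m1 m2 (A : 'M[K]_m1) (B : 'M[K]_m2) :
  psd A -> psd B -> psd (block_mx A 0 0 B).
Proof.
move=> [hA1 hA2] [hB1 hB2]; split.
  by rewrite tr_block_mx hA1 hB1 !trmx0.
by move=> v; rewrite -(vsubmxK v) form_block addr_ge0.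
Qed.

Lemma psd_blockl (K : numDomainType) m1 m2 (A : 'M[K]_m1) (B : 'M[K]_m2) :
  psd (block_mx A 0 0 B) -> forall u : 'cV_m1, 0 <= (u^T *m A *m u) 0 0.
Proof.
move=> [_ h] u; have := h (col_mx u 0).
have e : ((0:'cV[K]_m2)^T *m B *m (0:'cV[K]_m2)) 0 0 = 0.
  by rewrite trmx0 !mul0mx; apply: (@mxE K 1 1 _ (fun _ _ => 0)).
by rewrite form_block e addr0.
Qed.

Lemma psd_blockr (K : numDomainType) m1 m2 (A : 'M[K]_m1) (B : 'M[K]_m2) :
  psd (block_mx A 0 0 B) -> forall u : 'cV_m2, 0 <= (u^T *m B *m u) 0 0.
Proof.
move=> [_ h] u; have := h (col_mx 0 u).
have e : ((0:'cV[K]_m1)^T *m A *m (0:'cV[K]_m1)) 0 0 = 0.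
  by rewrite trmx0 !mul0mx; apply: (@mxE K 1 1 _ (fun _ _ => 0)).
by rewrite form_block e add0r.
Qed.

Lemma hank_sym (K : Type) m (f : nat -> K) :
  (\matrix_(i < m, j < m) f (i + j)%N)^T = \matrix_(i < m, j < m) f (i + j)%N.
Proof. by apply/matrixP => i j; rewrite !mxE addnC. Qed.

Lemma hank_psd (K : realFieldType) m n (f : nat -> K) (c t : 'I_n -> K) :
  (forall j, 0 <= c j) -> (forall k, f k = \sum_j c j * t j ^+ k) ->
  psd (\matrix_(i < m, j < m) f (i + j)%N).
Proof.
move=> hc hf; split; first exact: hank_sym.
move=> v; rewrite (@hank_form _ _ _ _ _ _ v hf); apply: sumr_ge0 => j _.
by rewrite mulr_ge0 // sqr_ge0.
Qed.

Lemma part1 (R : rcfType) (a b : R) n (t : 'I_n -> R) :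
  (forall i, a <= t i <= b) -> forall m,
  psd (hankH m (fun k => \sum_(i < n) t i ^+ k) a b).
Proof.
move=> ht m; apply: psd_block; last apply: psd_block.
- apply: (@hank_psd _ _ _ _ (fun _ => 1) t) => // k.
  by apply: eq_bigr => j _; rewrite mul1r.
- apply: (@hank_psd _ _ _ (fun k => (\sum_(i < n) t i ^+ k.+1) - a * \sum_(i < n) t i ^+ k) (fun j => t j - a) t).
    by move=> j; rewrite subr_ge0; case/andP: (ht j).
  move=> k /=; rewrite big_distrr -sumrB; apply: eq_bigr => j _.
  by rewrite exprS mulrBl.
- apply: (@hank_psd _ _ _ (fun k => b * (\sum_(i < n) t i ^+ k) - \sum_(i < n) t i ^+ k.+1) (fun j => b - t j) t).
    by move=> j; rewrite subr_ge0; case/andP: (ht j).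
  move=> k /=; rewrite big_distrr -sumrB; apply: eq_bigr => j _.
  by rewrite exprS mulrBl.
Qed.
Set Implicit Arguments. Unset Strict Implicit.

Definition lagQ (F : fieldType) (S : seq F) (w : F) : {poly F} :=
  \prod_(x <- S | x != w) ('X - x%:P).
Definition lag (F : fieldType) (S : seq F) (w : F) : {poly F} :=
  (lagQ S w).[w]^-1 *: lagQ S w.

Lemma lag_size (F : fieldType) (S : seq F) (w : F) :
  w \in S -> (size (lag S w) <= size S)%N.
Proof.
move=> wS; apply: leq_trans (size_scale_leq _ _) _.
rewrite /lagQ -big_filter size_prod_XsubC size_filter.
have h2 := count_predC (fun x => x != w) S.
have : has (predC (fun x => x != w)) S.
  by apply/hasP; exists w => //=; rewrite negbK.
by rewrite has_count => h1; rewrite -h2 -addn1 leq_add2l.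
Qed.

Lemma lag_eval (F : fieldType) (S : seq F) (w w' : F) :
  w \in S -> w' \in S -> (lag S w).[w'] = (w' == w)%:R.
Proof.
move=> wS w'S.
have Qw : (lagQ S w).[w] != 0.
  rewrite /lagQ horner_prod prodf_seq_neq0; apply/allP => x _.
  by apply/implyP => xw; rewrite hornerXsubC subr_eq0 eq_sym.
rewrite /lag hornerZ; have [->|ne] := eqVneq w' w; first by rewrite mulVf.
suff -> : (lagQ S w).[w'] = 0 by rewrite mulr0.
apply/eqP; rewrite /lagQ horner_prod prodf_seq_eq0; apply/hasP.
by exists w' => //; rewrite ne hornerXsubC subrr eqxx.
Qed.

Lemma form_blockl' (K : numDomainType) m1 m2 (A : 'M[K]_m1) (B : 'M[K]_m2) :
  (forall v : 'cV_(m1 + m2), 0 <= (v^T *m block_mx A 0 0 B *m v) 0 0) ->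
  forall u : 'cV_m1, 0 <= (u^T *m A *m u) 0 0.
Proof.
move=> h u; have := h (col_mx u 0).
have e : ((0:'cV[K]_m2)^T *m B *m (0:'cV[K]_m2)) 0 0 = 0.
  by rewrite trmx0 !mul0mx; apply: (@mxE K 1 1 _ (fun _ _ => 0)).
by rewrite form_block e addr0.
Qed.

Lemma form_blockr' (K : numDomainType) m1 m2 (A : 'M[K]_m1) (B : 'M[K]_m2) :
  (forall v : 'cV_(m1 + m2), 0 <= (v^T *m block_mx A 0 0 B *m v) 0 0) ->
  forall u : 'cV_m2, 0 <= (u^T *m B *m u) 0 0.
Proof.
move=> h u; have := h (col_mx 0 u).
have e : ((0:'cV[K]_m1)^T *m A *m (0:'cV[K]_m1)) 0 0 = 0.
  by rewrite trmx0 !mul0mx; apply: (@mxE K 1 1 _ (fun _ _ => 0)).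
by rewrite form_block e add0r.
Qed.

Section Two.
Variables (R : rcfType) (n : nat) (t : 'I_n -> R[i]) (s : nat -> R).
Hypothesis hs : forall k, (s k)%:C%C = \sum_(i < n) t i ^+ k.

Lemma moment (F : {poly R[i]}) :
  \sum_j F.[conjc (t j)] = \sum_j F.[t j].
Proof.
under eq_bigr do rewrite (horner_coef_wide _ (leqnn (size F))).
under [RHS]eq_bigr do rewrite (horner_coef_wide _ (leqnn (size F))).
rewrite exchange_big [RHS]exchange_big /=; apply: eq_bigr => k _.
rewrite -!big_distrr /=; congr (_ * _).
transitivity (conjc (\sum_j t j ^+ k)).
  by rewrite rmorph_sum; apply: eq_bigr => j _; rewrite rmorphXn.
by rewrite -hs conjc_real.
Qed.

Lemma conj_closed j : exists j', t j' = conjc (t j).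
Proof.
case: (boolP [exists j', t j' == conjc (t j)]) => [/existsP [j' /eqP]|hn].
  by exists j'.
exfalso.
pose T := undup ([seq t j | j <- enum 'I_n] ++ [seq conjc (t j) | j <- enum 'I_n]).
have uT : uniq T by apply: undup_uniq.
have inT1 j' : t j' \in T.
  by rewrite mem_undup mem_cat; apply/orP; left; apply/mapP; exists j'; rewrite ?mem_enum.
have inT2 j' : conjc (t j') \in T.
  by rewrite mem_undup mem_cat; apply/orP; right; apply/mapP; exists j'; rewrite ?mem_enum.
have hm := moment (lag T (conjc (t j))).
have h0 : \sum_j' (lag T (conjc (t j))).[t j'] = 0.
  apply: big1 => j' _; rewrite lag_eval //.
  case: eqP => // e; move: hn; rewrite negb_exists => /forallP /(_ j').
  by rewrite e eqxx.
rewrite h0 in hm; move: hm.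
under eq_bigr do rewrite lag_eval //.
rewrite -natr_sum (bigD1 j) //= eqxx => /eqP; rewrite pnatr_eq0.
by rewrite add1n.
Qed.

Lemma form_C m (f : nat -> R) (c : 'I_n -> R[i]) (q : {poly R}) :
  (forall k, (f k)%:C%C = \sum_j c j * t j ^+ k) -> (size q <= m)%N ->
  ((((\col_(k < m) q`_k)^T *m (\matrix_(i < m, j < m) f (i + j)%N)
     *m \col_(k < m) q`_k) 0 0)%:C)%C
   = \sum_j c j * ((map_poly (real_complex R) q).[t j]) ^+ 2.
Proof.
move=> hf hq.
set v := \col_(k < m) q`_k.
transitivity ((map_mx (real_complex R)
   (v^T *m (\matrix_(i < m, j < m) f (i + j)%N) *m v)) 0 0).
  by rewrite [RHS]mxE.
rewrite !map_mxM -map_trmx.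
have -> : map_mx (real_complex R) (\matrix_(i < m, j < m) f (i + j)%N)
   = \matrix_(i < m, j < m) (fun k => (f k)%:C%C) (i + j)%N.
  by apply/matrixP => i j; rewrite !mxE.
rewrite (@hank_form _ _ _ _ _ _ _ hf); apply: eq_bigr => j _.
congr (_ * _ ^+ 2).
rewrite (@horner_coef_wide _ m); last by rewrite size_map_poly.
by apply: eq_bigr => k _; rewrite !mxE coef_map.
Qed.

End Two.


Lemma sq_calc (R : rcfType) (e : R[i]) : e ^+ 2 = 1 ->
  (e * (2^-1 * 'i%C)) ^+ 2 = ((- (2^-1 * 2^-1) : R)%:C)%C.
Proof.
move=> he; rewrite rmorphN rmorphM fmorphV rmorph_nat.
rewrite !exprMn he sqr_i; ring.
Qed.

Section Two2.
Variables (R : rcfType) (n : nat) (t : 'I_n -> R[i]) (s : nat -> R).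
Hypothesis hs : forall k, (s k)%:C%C = \sum_(i < n) t i ^+ k.

Definition S := undup [seq t j | j <- enum 'I_n].

Lemma inS j : t j \in S.
Proof. by rewrite mem_undup; apply/mapP; exists j; rewrite ?mem_enum. Qed.

Lemma size_S : (size S <= n)%N.
Proof. by apply: leq_trans (size_undup _) _; rewrite size_map size_enum_ord. Qed.

Lemma rank_S : (size S <= \rank (hankR n s))%N.
Proof.
pose L (u : 'I_(size S)) := lag S (S`_u).
have SuS (u : 'I_(size S)) : S`_u \in S := mem_nth 0 (ltn_ord u).
pose A := \matrix_(u < size S, k < n) (L u)`_k.
pose V := \matrix_(k < n, j < n) t j ^+ k.
have hM : map_mx (real_complex R) (hankR n s) = V *m V^T.
  apply/matrixP => k l; rewrite !mxE hs; apply: eq_bigr => j _.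
  by rewrite !mxE exprD.
have hAV : A *m V = \matrix_(u < size S, j < n) ((t j == S`_u)%:R : R[i]).
  apply/matrixP => u j; rewrite !mxE -(lag_eval (SuS u) (inS j)).
  rewrite (horner_coef_wide _ (leq_trans (lag_size (SuS u)) size_S)).
  by apply: eq_bigr => k _; rewrite !mxE.
pose D := A *m V *m (A *m V)^T.
have hD : D = diag_mx (\row_(u < size S) ((\sum_j nat_of_bool (t j == nth (0%R : R[i]) S u))%:R : R[i])).
  apply/matrixP => u w; rewrite /D hAV !mxE.
  case: (eqVneq u w) => [<-|uw].
    rewrite mulr1n natr_sum; apply: eq_bigr => j _; rewrite !mxE.
    by case: (t j == S`_u); rewrite ?mulr1 ?mulr0.
  rewrite mulr0n; apply: big1 => j _; rewrite !mxE.
  have nuw : S`_u != S`_w by rewrite nth_uniq ?undup_uniq.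
  case: eqP => [e|]; case: eqP => [e'|]; rewrite ?mulr0 ?mul0r //.
  by move: nuw; rewrite -e -e' eqxx.
have unitD : D \in unitmx.
  rewrite hD unitmxE det_diag unitfE; apply/prodf_neq0 => u _.
  rewrite mxE pnatr_eq0 -lt0n.
  have := SuS u; rewrite mem_undup => /mapP [j _ ej].
  by rewrite (bigD1 j) //= ej eqxx.
rewrite -(mxrank_unit unitD) -(mxrank_map (real_complex R)) hM /D trmx_mul.
rewrite mulmxA -(mulmxA A).
apply: leq_trans (mxrankM_maxl _ _) _; exact: mxrankM_maxr.
Qed.

End Two2.


Section Two3.
Variables (R : rcfType) (n : nat) (t : 'I_n -> R[i]) (s : nat -> R).
Hypothesis hs : forall k, (s k)%:C%C = \sum_(i < n) t i ^+ k.

Lemma part2 m (a b : R) : (size (S t) <= m)%N -> psd (hankH m s a b) ->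
  forall i0, exists x : R, t i0 = x%:C%C /\ a <= x <= b.
Proof.
move=> hm [_ hpsd] i0.
have h1 := form_blockl' hpsd.
have h23 := form_blockr' hpsd.
have h2 := form_blockl' h23.
have h3 := form_blockr' h23.
pose z := t i0.
have zS : z \in S t := inS t i0.
pose P := lag (S t) z.
have hPs : (size P <= m)%N := leq_trans (lag_size zS) hm.
have Pt j : P.[t j] = (t j == z)%:R := lag_eval zS (inS t j).
pose Pb := map_poly conjc P.
have Pbt j : Pb.[t j] = (t j == conjc z)%:R.
  have [j' ej'] := conj_closed hs j.
  rewrite -{1}(conjcK (t j)) horner_map -ej' Pt rmorph_nat ej'.
  by rewrite (can2_eq (@conjcK R) (@conjcK R)).
pose qre := \poly_(k < size P) complex.Re (P`_k).
pose qim := \poly_(k < size P) complex.Im (P`_k).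
have qre_s : (size qre <= m)%N := leq_trans (size_poly _ _) hPs.
have qim_s : (size qim <= m)%N := leq_trans (size_poly _ _) hPs.
have qre_e x : (map_poly (real_complex R) qre).[x] = (P.[x] + Pb.[x]) * 2^-1.
  have -> : map_poly (real_complex R) qre = (P + Pb) * (2^-1)%:P.
    by apply/polyP => k; rewrite /qre coefMC coefD !coef_map /= ReJ_add.
  by rewrite hornerM hornerC hornerD.
have qim_e x : (map_poly (real_complex R) qim).[x]
    = (Pb.[x] - P.[x]) * (2^-1 * 'i%C).
  have -> : map_poly (real_complex R) qim = (Pb - P) * (2^-1 * 'i%C)%:P.
    by apply/polyP => k; rewrite /qim coefMC coefB !coef_map /= ImJ_sub mulrA.
  by rewrite hornerM hornerC hornerD hornerN.
have [zr|znr] := eqVneq (conjc z) z; last first.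
  exfalso.
  have hf1 : forall k, (s k)%:C%C = \sum_j 1 * t j ^+ k.
    by move=> k; rewrite hs; apply: eq_bigr => j _; rewrite mul1r.
  have hX := h1 (\col_(k < m) qim`_k).
  have e := form_C hf1 qim_s.
  have e2 : \sum_j 1 * ((map_poly (real_complex R) qim).[t j]) ^+ 2 =
    ((\sum_j (if (t j == z) || (t j == conjc z) then - (2^-1 * 2^-1) else 0 : R))%:C)%C.
    rewrite rmorph_sum; apply: eq_bigr => j _; rewrite mul1r qim_e Pt Pbt.
    case: (eqVneq (t j) z) => [->|ne].
      rewrite ?eqxx (eq_sym z) (negbTE znr) /=; apply: sq_calc; ring.
    case: (eqVneq (t j) (conjc z)) => [_|ne2].
      rewrite ?eqxx ?(negbTE znr) /=; apply: sq_calc; ring.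
    by rewrite ?(negbTE ne) ?(negbTE ne2) /= subrr mul0r expr2 mul0r rmorph0.
  move: (complexI (etrans e e2)) => e3.
  rewrite /hankR in hX; rewrite e3 (bigD1 i0) //= eqxx /= in hX.
  have : \sum_(j | j != i0) (if (t j == z) || (t j == conjc z) then - (2^-1 * 2^-1) else 0 : R) <= 0.
    apply: sumr_le0 => j _; case: ifP => _ //.
    by rewrite oppr_le0 mulr_ge0 // invr_ge0 ler0n.
  have : 0 < (2^-1 * 2^-1 : R) by rewrite mulr_gt0 // invr_gt0 ltr0n.
  lra.
have [x ex] : exists x : R, t i0 = x%:C%C.
  move: zr; rewrite /z; case: (t i0) => x y /eqP; rewrite eq_complex /=.
  by case/andP=> _ /eqP hy; exists x; rewrite -complexr0; congr (Complex _ _); lra.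
exists x; split => //.
have qt j : (map_poly (real_complex R) qre).[t j] = (t j == z)%:R.
  rewrite qre_e Pt Pbt zr; case: (t j == z) => /=.
    by rewrite -mulr2n mulr1n divff // pnatr_eq0.
  by rewrite addr0 mul0r.
have hf2 : forall k, ((s k.+1 - a * s k)%:C)%C = \sum_j (t j - a%:C%C) * t j ^+ k.
  move=> k; transitivity ((s k.+1)%:C%C - (a%:C%C) * (s k)%:C%C).
    by rewrite rmorphB rmorphM.
  rewrite !hs big_distrr -sumrB; apply: eq_bigr => j _.
  by rewrite exprS mulrBl.
have hf3 : forall k, ((b * s k - s k.+1)%:C)%C = \sum_j (b%:C%C - t j) * t j ^+ k.
  move=> k; transitivity ((b%:C%C) * (s k)%:C%C - (s k.+1)%:C%C).
    by rewrite rmorphB rmorphM.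
  rewrite !hs big_distrr -sumrB; apply: eq_bigr => j _.
  by rewrite exprS mulrBl.
have hXa : 0 <= ((\col_(k < m) qre`_k)^T *m
    (\matrix_(i < m, j < m) (fun k => s k.+1 - a * s k) (i + j)%N)
    *m \col_(k < m) qre`_k) 0 0 := h2 _.
have hXb : 0 <= ((\col_(k < m) qre`_k)^T *m
    (\matrix_(i < m, j < m) (fun k => b * s k - s k.+1) (i + j)%N)
    *m \col_(k < m) qre`_k) 0 0 := h3 _.
have ea := form_C hf2 qre_s.
have eb := form_C hf3 qre_s.
have ea2 : \sum_j (t j - a%:C%C) * ((map_poly (real_complex R) qre).[t j]) ^+ 2 =
    ((\sum_j (if t j == z then x - a else 0 : R))%:C)%C.
  rewrite rmorph_sum; apply: eq_bigr => j _; rewrite qt.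
  case: eqP => [->|_] /=; first by rewrite expr1n mulr1 /z ex rmorphB.
  by rewrite expr0n mulr0 rmorph0.
have eb2 : \sum_j (b%:C%C - t j) * ((map_poly (real_complex R) qre).[t j]) ^+ 2 =
    ((\sum_j (if t j == z then b - x else 0 : R))%:C)%C.
  rewrite rmorph_sum; apply: eq_bigr => j _; rewrite qt.
  case: eqP => [->|_] /=; first by rewrite expr1n mulr1 /z ex rmorphB.
  by rewrite expr0n mulr0 rmorph0.
move: (complexI (etrans ea ea2)) (complexI (etrans eb eb2)) => ea3 eb3.
rewrite ea3 (bigD1 i0) //= eqxx in hXa.
rewrite eb3 (bigD1 i0) //= eqxx in hXb.
apply/andP; split.
  rewrite leNgt; apply/negP => hxa.
  have : \sum_(j | j != i0) (if t j == z then x - a else 0 : R) <= 0.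
    by apply: sumr_le0 => j _; case: ifP => _ //; lra.
  lra.
rewrite leNgt; apply/negP => hxb.
have : \sum_(j | j != i0) (if t j == z then b - x else 0 : R) <= 0.
  by apply: sumr_le0 => j _; case: ifP => _ //; lra.
lra.
Qed.

End Two3.

Unset Implicit Arguments.

Theorem theorem3p2 (R : rcfType) (a b : R) (hab : a < b) (n : nat) :
  (* (i) *)
  (forall t : 'I_n -> R,
     (forall i, a <= t i <= b) ->
     forall m : nat, (1 <= m)%N ->
       psd (hankH m (fun k => \sum_(i < n) t i ^+ k) a b)) /\
  (* (ii) *)
  (forall (t : 'I_n -> R[i]) (s : nat -> R),
     (forall k, (s k)%:C%C = \sum_(i < n) t i ^+ k) ->
     forall m : nat, (\rank (hankR n s) <= m)%N ->
       psd (hankH m s a b) ->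
       forall i, exists x : R, t i = x%:C%C /\ a <= x <= b).
Proof.
split.
  by move=> t ht m _; apply: part1.
move=> t s hs m hm hpsd i.
exact: (part2 hs (leq_trans (rank_S hs) hm) hpsd i).
Qed.
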